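(* Let $p$ be an odd prime and $k\in\{1,2,\ldots,\frac{p-1}2\}$. Then $$\frac{(-1)^k\binom{(p-1)/2+k}{k}}{\binom{(p-1)/2}{k}}\equiv1+2p\sum_{i=1}^k\frac1{2i-1}\equiv3-2(-4)^k\frac{\binom{(p-1)/2}{k}}{\binom{2k}k}\pmod{p^2}.$$
   Context: Congruences are between rational numbers whose denominators are prime to $p$. *)

(* Defs.v *)
From mathcomp Require Import all_boot all_order all_algebra.
Set Implicit Arguments. Unset Strict Implicit. Unset Printing Implicit Defensive.
Import Order.TTheory GRing.Theory Num.Theory.
Local Open Scope ring_scope.

Definition p_integral (p : nat) (x : rat) : Prop :=
  coprime p `|denq x|%N.

Definition rat_cong_mod (p : nat) (m : rat) (x y : rat) : Prop :=
  p_integral p ((x - y) / m).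

(* Main.v *)
Require Import Defs.
From mathcomp Require Import all_boot all_order all_algebra.
From mathcomp Require Import ring lra zify.
Import Order.TTheory GRing.Theory Num.Theory.
Local Open Scope ring_scope.

Definition pint (p : nat) (x : rat) :=
  exists (n d : int), coprime p `|d|%N /\ x = n%:~R / d%:~R.

Section P.
Variable p : nat.
Hypothesis p_gt1 : (1 < p)%N.

Lemma cop_ne0 (d : int) : coprime p `|d|%N -> d != 0.
Proof. by apply: contraTneq => ->; rewrite /coprime gcdn0; case: p p_gt1 => [|[]]. Qed.

Lemma pint_ok x : pint p x -> p_integral p x.
Proof.
case=> n [d] [cd ->]; rewrite /p_integral.
move: cd; case: divqP => [d0|k y k0] cd; first by move: (cop_ne0 _ cd); rewrite ?d0.
move: cd; rewrite abszM => cd; apply: coprime_dvdr cd; exact: dvdn_mull.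
Qed.

Lemma pintD x y : pint p x -> pint p y -> pint p (x + y).
Proof.
case=> n1 [d1] [c1 ->]; case=> n2 [d2] [c2 ->].
exists (n1 * d2 + n2 * d1), (d1 * d2); split.
  by rewrite abszM coprimeMr c1 c2.
have h1 : (d1%:~R : rat) != 0 by rewrite intr_eq0 cop_ne0.
have h2 : (d2%:~R : rat) != 0 by rewrite intr_eq0 cop_ne0.
rewrite rmorphD !rmorphM /=; field; by rewrite h1 h2.
Qed.

Lemma pintM x y : pint p x -> pint p y -> pint p (x * y).
Proof.
case=> n1 [d1] [c1 ->]; case=> n2 [d2] [c2 ->].
exists (n1 * n2), (d1 * d2); split.
  by rewrite abszM coprimeMr c1 c2.
have h1 : (d1%:~R : rat) != 0 by rewrite intr_eq0 cop_ne0.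
have h2 : (d2%:~R : rat) != 0 by rewrite intr_eq0 cop_ne0.
rewrite !rmorphM /=; field; by rewrite h1 h2.
Qed.

Lemma pintZ (n : int) : pint p n%:~R.
Proof. by exists n, 1; rewrite /coprime gcdn1 divr1. Qed.

Lemma pintN x : pint p x -> pint p (- x).
Proof. move=> h; rewrite -mulN1r; apply: pintM h; exact: (pintZ (-1)). Qed.

Lemma pintV (d : int) : coprime p `|d|%N -> pint p (d%:~R)^-1.
Proof. by move=> c; exists 1, d; rewrite div1r. Qed.

End P.

Section Main.
Variables (h : nat) (p : nat).
Hypothesis hp : p = (2 * h).+1.
Hypothesis pr : prime p.

Let p_gt1 : (1 < p)%N. Proof. exact: prime_gt1. Qed.
Let pD := @pintD p p_gt1.
Let pM := @pintM p p_gt1.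
Let pN := @pintN p p_gt1.

Definition Ss k : rat := \sum_(1 <= i < k.+1) ((2 * i).-1)%:R^-1.
Definition Aa k : rat := (-1) ^+ k * ('C(h + k, k))%:R / ('C(h, k))%:R.
Definition Dd k : rat := (-4) ^+ k * ('C(h, k))%:R / ('C(2 * k, k))%:R.

Lemma copsmall m : (0 < m < p)%N -> coprime p m.
Proof.
move=> /andP[m0 mp]; rewrite prime_coprime //; apply/negP => /dvdn_leq.
by move=> /(_ m0); rewrite leqNgt mp.
Qed.

Lemma invnat_pint m : (0 < m < p)%N -> pint p (m%:R)^-1.
Proof. by move=> hm; rewrite pmulrn; apply: pintV; exact: copsmall. Qed.

Lemma nat_pint m : pint p m%:R.
Proof. by rewrite pmulrn; apply: pintZ. Qed.

Lemma inv_step k : (k.+1 <= h)%N ->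
  pint p (Ss k) ->
  (exists E, pint p E /\ Aa k = 1 + 2 * p%:R * Ss k + p%:R ^+ 2 * E) ->
  (exists F, pint p F /\ Dd k = 1 - p%:R * Ss k + p%:R ^+ 2 * F) ->
  [/\ pint p (Ss k.+1),
  (exists E, pint p E /\ Aa k.+1 = 1 + 2 * p%:R * Ss k.+1 + p%:R ^+ 2 * E) &
  (exists F, pint p F /\ Dd k.+1 = 1 - p%:R * Ss k.+1 + p%:R ^+ 2 * F)].
Proof.
move=> kh pS [E [pE hA]] [F [pF hD]].
have ha1 : (0 < (2 * k).+1 < p)%N by lia.
have ha2 : (0 < p - (2 * k).+1 < p)%N by lia.
have pa : pint p ((2 * k).+1%:R)^-1 by apply: invnat_pint.
have pap : pint p ((p - (2 * k).+1)%:R)^-1 by apply: invnat_pint.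
have hS : Ss k.+1 = Ss k + ((2 * k).+1%:R)^-1.
  rewrite /Ss big_nat_recr //=; congr (_ + _ %:R^-1); lia.
have an0 : ((2 * k).+1%:R : rat) != 0 by rewrite pnatr_eq0.
have apn0 : ((p - (2 * k).+1)%:R : rat) != 0 by rewrite pnatr_eq0 -lt0n; case/andP: ha2.
have pn0 : (p%:R : rat) != 0 by rewrite pnatr_eq0 -lt0n ltnW.
have eap : ((p - (2 * k).+1)%:R : rat) = p%:R - (2 * k).+1%:R by rewrite natrB //; lia.
split.
- by rewrite hS; apply: pD.
- set x : rat := h%:R; set y : rat := k%:R.
  have px : (p%:R : rat) = 2 * x + 1 by rewrite hp -addn1 natrD natrM.
  have ea : ((2 * k).+1%:R : rat) = 2 * y + 1 by rewrite -addn1 natrD natrM.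
  have y0 : 0 <= y by rewrite ler0n.
  have xy : y + 1 <= x by rewrite /x /y natr1 ler_nat.
  have c2n0 : ('C(h, k)%:R : rat) != 0 by rewrite pnatr_eq0 -lt0n bin_gt0; lia.
  have e1 : (y + 1) * 'C(h + k.+1, k.+1)%:R = (x + y + 1) * 'C(h + k, k)%:R.
    have := mul_bin_diag (h + k.+1) k; rewrite addnS /= => /(congr1 (fun n => n%:R : rat)).
    by rewrite !natrM -!natr1 natrD => ->.
  have e2 : (y + 1) * 'C(h, k.+1)%:R = (x - y) * 'C(h, k)%:R.
    have := mul_bin_left h k => /(congr1 (fun n => n%:R : rat)).
    by rewrite !natrM natrB ?(ltnW kh) // -!natr1 => ->.
  have hAk : Aa k.+1 = Aa k * (- (x + y + 1) / (x - y)).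
    rewrite /Aa exprS.
    have -> : ('C(h + k.+1, k.+1)%:R : rat) = (x + y + 1) * 'C(h + k, k)%:R / (y + 1).
      rewrite -e1; field; rewrite lt0r_neq0 //; lra.
    have -> : ('C(h, k.+1)%:R : rat) = (x - y) * 'C(h, k)%:R / (y + 1).
      rewrite -e2; field; rewrite lt0r_neq0 //; lra.
    field.
    rewrite -/x -/y c2n0 /=; apply/andP; split; rewrite lt0r_neq0 //; lra.
  exists ((4%:R * Ss k + E * ((2*k).+1%:R + p%:R) + 2%:R * (2*k).+1%:R^-1) * - (p - (2*k).+1)%:R^-1).
  split.
    apply: pM; last exact: pN.
    apply: pD; last exact: pM (nat_pint _) pa.
    apply: pD; first exact: pM (nat_pint _) pS.
    apply: pM => //; apply: pD; exact: nat_pint.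
  rewrite hAk hA hS eap ea px.
  field.
  by rewrite -/x -/y; repeat (apply/andP; split); rewrite lt0r_neq0 //; lra.
- set x : rat := h%:R; set y : rat := k%:R.
  have px : (p%:R : rat) = 2 * x + 1 by rewrite hp -addn1 natrD natrM.
  have ea : ((2 * k).+1%:R : rat) = 2 * y + 1 by rewrite -addn1 natrD natrM.
  have y0 : 0 <= y by rewrite ler0n.
  have xy : y + 1 <= x by rewrite /x /y natr1 ler_nat.
  have dn0 : ('C(2 * k, k)%:R : rat) != 0 by rewrite pnatr_eq0 -lt0n bin_gt0; lia.
  have e2 : (y + 1) * 'C(h, k.+1)%:R = (x - y) * 'C(h, k)%:R.
    have := mul_bin_left h k => /(congr1 (fun n => n%:R : rat)).
    by rewrite !natrM natrB ?(ltnW kh) // -!natr1 => ->.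
  have n3 : (k.+1 * (k.+1 * 'C(2 * k.+1, k.+1)) = (2 * k.+1) * ((2 * k).+1 * 'C(2 * k, k)))%N.
    have m1 := mul_bin_diag (2 * k.+1) k.
    have m2 := mul_bin_diag (2 * k).+1 k.
    have m3 := mul_bin_left (2 * k).+1 k.
    rewrite (_ : ((2 * k.+1).-1 = (2 * k).+1)%N) in m1; last by lia.
    rewrite (_ : ((2 * k).+1 - k = k.+1)%N) in m3; last by lia.
    by rewrite m3 in m2; rewrite -m1 m2 mulnCA.
  have e3 : (y + 1) ^+ 2 * 'C(2 * k.+1, k.+1)%:R = (2 * y + 2) * (2 * y + 1) * 'C(2 * k, k)%:R.
    have := congr1 (fun n => n%:R : rat) n3; rewrite /= !natrM -!natr1 natrM -/y.
    by move=> h3; rewrite expr2 -mulrA h3 -?natr1 -/y; ring.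
  have hDk : Dd k.+1 = Dd k * ((2 * y + 1 - (2 * x + 1)) / (2 * y + 1)).
    rewrite /Dd exprS.
    have -> : ('C(2 * k.+1, k.+1)%:R : rat) = (2 * y + 2) * (2 * y + 1) * 'C(2 * k, k)%:R / (y + 1) ^+ 2.
      rewrite -e3; field; rewrite lt0r_neq0 //; lra.
    have -> : ('C(h, k.+1)%:R : rat) = (x - y) * 'C(h, k)%:R / (y + 1).
      rewrite -e2; field; rewrite lt0r_neq0 //; lra.
    field.
    rewrite -/x -/y dn0 /=; repeat (apply/andP; split); rewrite lt0r_neq0 //; lra.
  exists (Ss k * (2*k).+1%:R^-1 + F * (1 - p%:R * (2*k).+1%:R^-1)).
  split.
    apply: pD; first exact: pM pS pa.
    apply: pM => //; apply: pD; first exact: (nat_pint 1).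
    apply: pN; apply: pM pa; exact: nat_pint.
  rewrite hDk hD hS ea px.
  field.
  by rewrite -/x -/y; repeat (apply/andP; split); rewrite lt0r_neq0 //; lra.
Qed.

Lemma inv_all k : (k <= h)%N ->
  [/\ pint p (Ss k),
  (exists E, pint p E /\ Aa k = 1 + 2 * p%:R * Ss k + p%:R ^+ 2 * E) &
  (exists F, pint p F /\ Dd k = 1 - p%:R * Ss k + p%:R ^+ 2 * F)].
Proof.
elim: k => [|k IH] kh.
  have S0 : Ss 0 = 0 by rewrite /Ss big_geq.
  split; first by rewrite S0; exact: (pintZ p 0).
  - exists 0; split; first exact: (pintZ p 0).
    by rewrite /Aa S0 /= addn0 bin0 !mulr0 !addr0 mul1r invr1.
  - exists 0; split; first exact: (pintZ p 0).
    by rewrite /Dd S0 /= bin0 !mulr0 subr0 addr0 mul1r invr1.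
have [h1 h2 h3] := IH (ltnW kh).
exact: inv_step.
Qed.

End Main.

Theorem lemma2p5 (p k : nat) :
  prime p -> odd p -> (1 <= k)%N -> (k <= p.-1./2)%N ->
  let h := p.-1./2 in
  let A : rat := (-1) ^+ k * ('C(h + k, k))%:R / ('C(h, k))%:R in
  let B : rat := 1 + 2 * p%:R * \sum_(1 <= i < k.+1) ((2 * i).-1)%:R^-1 in
  let C : rat := 3 - 2 * (-4) ^+ k * ('C(h, k))%:R / ('C(2 * k, k))%:R in
  rat_cong_mod p (p%:R ^+ 2) A B /\ rat_cong_mod p (p%:R ^+ 2) B C.
Proof.
move=> pr op k1 kh h A B C.
have hp : p = (2 * h).+1 by rewrite /h; lia.
have p1 : (1 < p)%N by exact: prime_gt1.
have pn0 : (p%:R : rat) != 0 by rewrite pnatr_eq0 -lt0n ltnW.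
have [_ [E [pE hA]] [F [pF hD]]] := @inv_all h p hp pr k kh.
have eA : A = Aa h k := erefl.
have eB : B = 1 + 2 * p%:R * Ss k := erefl.
have eC : C = 3 - 2 * Dd h k by rewrite /C /Dd !mulrA.
rewrite /rat_cong_mod; split; apply: (@pint_ok p p1).
  have -> : (A - B) / p%:R ^+ 2 = E by rewrite eA eB hA; field.
  exact: pE.
have -> : (B - C) / p%:R ^+ 2 = 2%:R * F by rewrite eC eB hD; field.
apply: (@pintM p p1) pF; exact: nat_pint.
Qed.
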